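(* Let $\alpha\in(0,1]$, $\mu\in(0,1]$, $\lambda>0$, and define $(c^{(\mu)}_k)_{k\ge0}$ by $\sum_{k\ge0}c^{(\mu)}_ku^k=\Big(\frac{(1-u)^\alpha}{\lambda+(1-u)^\alpha}\Big)^\mu$ for $|u|<1$. Then $c^{(\mu)}_0=(\lambda+1)^{-\mu}>0$, $c^{(\mu)}_k<0$ for all $k\ge1$, and $\sum_{k\ge0}c^{(\mu)}_k=0$. Equivalently, the upper triangular circulant matrix $[g_{ML,\alpha}(\mathcal L)]^\mu=\mathcal L^{\alpha\mu}(\lambda\mathbf 1+\mathcal L^\alpha)^{-\mu}$, which for $\mu\in(0,1)$ equals $-\frac1{\Gamma(-\mu)}\int_0^\infty(\mathbf 1-e^{-\tau g_{ML,\alpha}(\mathcal L)})\tau^{-\mu-1}d\tau$, satisfies the good Laplacian properties (zero row sums, positive diagonal, non-positive off-diagonal entries), and $\delta_{mn}-[g_{ML,\alpha}(\mathcal L)]^\mu_{m,n}/c^{(\mu)}_0$ is a transition matrix with strictly positive entries for $n>m$.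
   Context: $\mathcal L$ is the $\mathbb Z\times\mathbb Z$ matrix $\mathcal L_{mn}=\delta_{mn}-\delta_{m,n-1}$; a matrix function of $\mathcal L$ with generating function $F(1-u)=\sum_kf_ku^k$ is the upper triangular circulant matrix with entries $[F]_{m,n}=f_{n-m}$ ($n\ge m$), $0$ otherwise. $g_{ML,\alpha}(\mathcal L)$ has generating function $\frac{(1-u)^\alpha}{\lambda+(1-u)^\alpha}$. *)

(* Defs.v *)
From Stdlib Require Export Reals ZArith.
From Coquelicot Require Export Coquelicot.
Open Scope R_scope.

(* Generating function u |-> ((1-u)^alpha / (lambda + (1-u)^alpha))^mu,
   for real u with |u| < 1 (so 1 - u > 0 and all real powers are of
   positive bases). *)
Definition gen_fun (alpha mu lambda u : R) : R :=
  Rpower (Rpower (1 - u) alpha / (lambda + Rpower (1 - u) alpha)) mu.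

Definition is_gen_coeffs (alpha mu lambda : R) (c : nat -> R) : Prop :=
  forall u : R, Rabs u < 1 -> is_series (fun k => c k * u ^ k) (gen_fun alpha mu lambda u).

Definition circ_mx (c : nat -> R) (m n : Z) : R :=
  if (m <=? n)%Z then c (Z.to_nat (n - m)) else 0.

Definition kron (m n : Z) : R := if Z.eq_dec m n then 1 else 0.

(* Good Laplacian properties of a Z x Z upper triangular matrix A:
   zero row sums (the row m is supported on n >= m), positive diagonal,
   non-positive off-diagonal entries. *)
Definition good_laplacian (A : Z -> Z -> R) : Prop :=
  (forall m n : Z, (n < m)%Z -> A m n = 0) /\
  (forall m : Z, is_series (fun j : nat => A m (m + Z.of_nat j)%Z) 0) /\
  (forall m : Z, 0 < A m m) /\
  (forall m n : Z, m <> n -> A m n <= 0).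

Definition transition_mx (P : Z -> Z -> R) : Prop :=
  (forall m n : Z, (n < m)%Z -> P m n = 0) /\
  (forall m n : Z, 0 <= P m n) /\
  (forall m : Z, is_series (fun j : nat => P m (m + Z.of_nat j)%Z) 1).

(* Main.v *)
Require Import Defs.
From Stdlib Require Import Lra Lia.

Lemma sum_n_S (a : nat -> R) n : sum_f_R0 a (S n) = sum_f_R0 a n + a (S n).
Proof. reflexivity. Qed.

Lemma is_series_lim (a : nat -> R) l :
  is_series a l -> is_lim_seq (fun N => sum_f_R0 a N) l.
Proof.
  intro H. apply is_lim_seq_ext with (sum_n a).
  intro n; apply sum_n_Reals. exact H.
Qed.

Lemma lim_is_series (a : nat -> R) (l : R) :
  is_lim_seq (fun N => sum_f_R0 a N) l -> is_series a l.
Proof.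
  intro H. assert (H' : is_lim_seq (sum_n a) l).
  { apply is_lim_seq_ext with (fun N => sum_f_R0 a N).
    intro n; symmetry; apply sum_n_Reals. exact H. }
  exact H'.
Qed.

Lemma partial_le (a : nat -> R) l :
  (forall n, 0 <= a n) -> is_series a l -> forall N, sum_f_R0 a N <= l.
Proof.
  intros Hp H N. apply (is_lim_seq_incr_compare (fun N => sum_f_R0 a N) l).
  now apply is_series_lim.
  intro n. rewrite sum_n_S. specialize (Hp (S n)). lra.
Qed.

Lemma term_le (a : nat -> R) l :
  (forall n, 0 <= a n) -> is_series a l -> forall n, a n <= l.
Proof.
  intros Hp H n. eapply Rle_trans; [|apply (partial_le a l Hp H n)].
  destruct n. simpl; lra. rewrite sum_n_S.
  assert (0 <= sum_f_R0 a n).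
  { apply cond_pos_sum. exact Hp. }
  lra.
Qed.

Lemma series_le_bound (a : nat -> R) l B :
  is_series a l -> (forall N, sum_f_R0 a N <= B) -> l <= B.
Proof.
  intros H HB.
  assert (Hl := is_lim_seq_le _ _ _ _ HB (is_series_lim _ _ H) (is_lim_seq_const B)).
  exact Hl.
Qed.

Lemma series_nonneg (a : nat -> R) :
  (forall n, 0 <= a n) -> ex_series a -> 0 <= Series a.
Proof.
  intros Hp [l Hl]. rewrite (is_series_unique _ _ Hl).
  assert (H := is_lim_seq_le _ _ _ _ (fun N => cond_pos_sum a N Hp) (is_lim_seq_const 0) (is_series_lim _ _ Hl)).
  exact H.
Qed.

Lemma nn_bounded (a : nat -> R) B :
  (forall n, 0 <= a n) -> (forall N, sum_f_R0 a N <= B) ->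
  ex_series a /\ Series a <= B.
Proof.
  intros Hp HB.
  assert (E : ex_finite_lim_seq (fun N => sum_f_R0 a N)).
  { apply ex_finite_lim_seq_incr with B. intro n. rewrite sum_n_S.
    specialize (Hp (S n)); lra. exact HB. }
  destruct E as [l Hl].
  assert (Hs : is_series a l) by now apply lim_is_series.
  split. exists l; exact Hs.
  rewrite (is_series_unique _ _ Hs). now apply series_le_bound with a.
Qed.

Lemma sum_single_le (f : nat -> R) j N :
  (forall n, 0 <= f n) -> (j <= N)%nat -> f j <= sum_f_R0 f N.
Proof.
  intros Hp Hj. induction N.
  - assert (j = 0)%nat by lia. subst. simpl. lra.
  - destruct (Nat.eq_dec j (S N)).
    + subst. rewrite sum_n_S. assert (0 <= sum_f_R0 f N) by (apply cond_pos_sum; auto). lra.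
    + rewrite sum_n_S. assert (f j <= sum_f_R0 f N) by (apply IHN; lia).
      specialize (Hp (S N)); lra.
Qed.

Lemma is_series_finite (f : nat -> R) N :
  (forall j, (N < j)%nat -> f j = 0) -> is_series f (sum_f_R0 f N).
Proof.
  intro Hz. apply lim_is_series.
  apply is_lim_seq_ext_loc with (fun _ => sum_f_R0 f N).
  - exists N. intros n Hn. induction Hn. reflexivity.
    rewrite sum_n_S, <- IHHn, Hz by lia. ring.
  - apply is_lim_seq_const.
Qed.

Lemma swap_fin (e : nat -> nat -> R) N :
  (forall k, ex_series (fun j => e j k)) ->
  ex_series (fun j => sum_f_R0 (fun k => e j k) N) /\
  Series (fun j => sum_f_R0 (fun k => e j k) N) =
  sum_f_R0 (fun k => Series (fun j => e j k)) N.
Proof.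
  intro Hc. induction N.
  - simpl. split. apply Hc. reflexivity.
  - destruct IHN as [E1 E2]. simpl.
    split.
    + apply (ex_series_plus (fun j => sum_f_R0 (fun k => e j k) N) (fun j => e j (S N))); auto.
    + rewrite Series_plus; auto. rewrite E2. reflexivity.
Qed.

Lemma fubini_nn (e : nat -> nat -> R) (r : nat -> R) S :
  (forall j k, 0 <= e j k) -> (forall j, is_series (e j) (r j)) ->
  is_series r S ->
  (forall k, ex_series (fun j => e j k)) /\
  is_series (fun k => Series (fun j => e j k)) S.
Proof.
  intros Hp Hr HS.
  assert (Hrp : forall j, 0 <= r j).
  { intro j. eapply Rle_trans; [apply (Hp j 0%nat)|]. apply (term_le (e j)); auto. }
  assert (Hc : forall k, ex_series (fun j => e j k)).
  { intro k. apply (ex_series_le (fun j => e j k) r).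
    intro j. unfold norm; simpl. unfold abs; simpl. rewrite Rabs_pos_eq by auto.
    apply (term_le (e j)); auto. exists S; auto. }
  split; auto.
  set (C := fun k => Series (fun j => e j k)).
  assert (HCp : forall k, 0 <= C k).
  { intro k. unfold C. apply series_nonneg. intro; auto. auto. }
  assert (HB : forall N, sum_f_R0 C N <= S).
  { intro N. destruct (swap_fin e N Hc) as [E1 E2]. unfold C. rewrite <- E2.
    rewrite <- (is_series_unique r S HS). apply Series_le.
    intro j. split. apply cond_pos_sum. intro; auto.
    rewrite <- (is_series_unique _ _ (Hr j)). apply (partial_le (e j)); auto.
    apply Series_correct. exists (r j); auto.
    exists S; auto. }
  destruct (nn_bounded C S HCp HB) as [EC LC].
  assert (GC : S <= Series C).
  { apply (series_le_bound r S (Series C) HS). intro M.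
    assert (Hc' : forall j, ex_series (fun k => e j k)).
    { intro j. exists (r j); auto. }
    destruct (swap_fin (fun k j => e j k) M Hc') as [E1 E2].
    replace (sum_f_R0 r M) with (sum_f_R0 (fun j => Series (fun k => e j k)) M).
    2:{ apply sum_eq. intros j _. apply is_series_unique; auto. }
    rewrite <- E2. apply Series_le. intro k. split.
    apply cond_pos_sum; intro; auto.
    apply (partial_le (fun j => e j k)); auto. apply Series_correct; auto.
    exact EC. }
  assert (Series C = S) by lra.
  rewrite <- H. apply Series_correct; auto.
Qed.

Lemma fubini_abs (e : nat -> nat -> R) (ra : nat -> R) (SA : R) :
  (forall j, is_series (fun k => Rabs (e j k)) (ra j)) -> is_series ra SA ->
  (forall k, ex_series (fun j => e j k)) /\ ex_series (fun j => Series (e j)) /\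
  is_series (fun k => Series (fun j => e j k)) (Series (fun j => Series (e j))).
Proof.
  intros Hr HS.
  assert (Ee : forall j, ex_series (e j)).
  { intro j. apply ex_series_Rabs. exists (ra j); auto. }
  assert (ESe : ex_series (fun j => Series (e j))).
  { apply (@ex_series_le R_AbsRing R_CompleteNormedModule _ ra). intro j. unfold norm; simpl; unfold abs; simpl.
    rewrite <- (is_series_unique _ _ (Hr j)). apply Series_Rabs. exists (ra j); auto.
    exists SA; auto. }
  destruct (fubini_nn (fun j k => Rabs (e j k)) ra SA) as [F1 F2]; auto.
  { intros; apply Rabs_pos. }
  destruct (fubini_nn (fun j k => Rabs (e j k) + e j k) (fun j => ra j + Series (e j))
      (SA + Series (fun j => Series (e j)))) as [G1 G2].
  { intros j k. pose proof (Rle_abs (- e j k)). rewrite Rabs_Ropp in H. lra. }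
  { intro j. apply (is_series_plus (fun k => Rabs (e j k)) (e j)); auto.
    apply Series_correct; auto. }
  { apply (is_series_plus ra (fun j => Series (e j))); auto. apply Series_correct; auto. }
  assert (Hk : forall k, ex_series (fun j => e j k) /\
     Series (fun j => e j k) = Series (fun j => Rabs (e j k) + e j k) - Series (fun j => Rabs (e j k))).
  { intro k.
    assert (E : ex_series (fun j => (Rabs (e j k) + e j k) - Rabs (e j k))).
    { apply (ex_series_minus (fun j => Rabs (e j k) + e j k) (fun j => Rabs (e j k))); auto. }
    split. { eapply ex_series_ext; [|exact E]. intro; simpl; ring. }
    rewrite <- Series_minus; auto. apply Series_ext. intro; ring. }
  split. intro k; apply Hk.
  split. auto.
  replace (Series (fun j => Series (e j))) with
     ((SA + Series (fun j => Series (e j))) - SA) by ring.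
  eapply is_series_ext.
  2:{ apply (is_series_minus _ _ _ _ G2 F2). }
  intro k. simpl. rewrite (proj2 (Hk k)). unfold plus, opp; simpl. ring.
Qed.

Fixpoint tpow (t : nat -> R) (j : nat) (k : nat) : R :=
  match j with
  | O => match k with O => 1 | _ => 0 end
  | S j' => PS_mult t (tpow t j') k
  end.

Lemma tpow_nn t j k : (forall k, 0 <= t k) -> 0 <= tpow t j k.
Proof.
  intro Hp. revert k; induction j; intro k; simpl.
  - destruct k; lra.
  - unfold PS_mult. apply cond_pos_sum. intro i. apply Rmult_le_pos; auto.
Qed.

Lemma tpow_low t j k : t 0%nat = 0 -> (k < j)%nat -> tpow t j k = 0.
Proof.
  intro H0. revert k; induction j; intros k Hk. lia.
  simpl. unfold PS_mult. apply sum_eq_R0. intros i Hi.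
  destruct i. rewrite H0; ring.
  rewrite IHj by lia. ring.
Qed.

Lemma tpow_one t k : tpow t 1 k = t k.
Proof.
  simpl. unfold PS_mult. destruct k. simpl. ring.
  rewrite sum_n_S. rewrite sum_eq_R0. replace (S k - S k)%nat with 0%nat by lia. ring.
  intros i Hi. replace (S k - i)%nat with (S (k - i)) by lia. ring.
Qed.

Lemma tpow_diag t j : t 0%nat = 0 -> tpow t j j = t 1%nat ^ j.
Proof.
  intro H0. induction j. reflexivity.
  simpl. unfold PS_mult. rewrite decomp_sum by lia. simpl pred.
  rewrite H0, Rmult_0_l, Rplus_0_l.
  destruct j. simpl. ring.
  rewrite decomp_sum by lia. simpl pred.
  rewrite sum_eq_R0.
  - replace (S (S j) - 1)%nat with (S j) by lia. rewrite IHj. simpl. ring.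
  - intros i Hi. rewrite tpow_low; auto. ring. lia.
Qed.

Lemma delta_series (x : R) :
  is_series (fun k => (match k with O => 1 | _ => 0 end) * x ^ k) 1.
Proof.
  pose proof (is_series_finite (fun k => (match k with O => 1 | _ => 0 end) * x ^ k) 0%nat) as H.
  replace (sum_f_R0 _ 0) with 1 in H by (simpl; ring). apply H.
  intros j Hj. destruct j. lia. ring.
Qed.

Lemma tpow_series (t : nat -> R) (T : R -> R) :
  (forall k, 0 <= t k) ->
  (forall x, Rabs x < 1 -> is_series (fun k => t k * x ^ k) (T x)) ->
  forall j x, Rabs x < 1 -> is_series (fun k => tpow t j k * x ^ k) (T x ^ j).
Proof.
  intros Hp HT j. induction j; intros x Hx.
  - simpl. apply delta_series.
  - assert (Hax : Rabs (Rabs x) < 1) by (rewrite Rabs_Rabsolu; auto).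
    assert (M := is_series_mult (fun k => t k * x ^ k) (fun k => tpow t j k * x ^ k)
                   (T x) (T x ^ j) (HT x Hx) (IHj x Hx)).
    assert (A1 : ex_series (fun n => Rabs (t n * x ^ n))).
    { exists (T (Rabs x)). eapply is_series_ext; [|apply (HT _ Hax)].
      intro n. rewrite Rabs_mult, <- RPow_abs, (Rabs_pos_eq (t n)); auto. }
    assert (A2 : ex_series (fun n => Rabs (tpow t j n * x ^ n))).
    { exists (T (Rabs x) ^ j). eapply is_series_ext; [|apply (IHj _ Hax)].
      intro n. rewrite Rabs_mult, <- RPow_abs, (Rabs_pos_eq (tpow t j n)); auto. apply tpow_nn; auto. }
    specialize (M A1 A2).
    eapply is_series_ext; [|exact M].
    intro n. simpl. unfold PS_mult. rewrite (Rmult_comm _ (x ^ n)), scal_sum. apply sum_eq.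
    intros i Hi. assert (E : x ^ n = x ^ i * x ^ (n - i)).
    { rewrite <- pow_add. f_equal. lia. }
    rewrite E. ring.
Qed.

Definition bcomp (t a : nat -> R) (k : nat) : R :=
  sum_f_R0 (fun j => a j * tpow t j k) k.

Lemma compose (t a : nat -> R) (T : R -> R) :
  t 0%nat = 0 -> (forall k, 0 <= t k) -> (forall j, 0 <= a j) ->
  (forall x, Rabs x < 1 -> is_series (fun k => t k * x ^ k) (T x)) ->
  (forall x, 0 <= x < 1 -> ex_series (fun j => a j * T x ^ j)) ->
  forall u, Rabs u < 1 ->
  is_series (fun k => bcomp t a k * u ^ k) (Series (fun j => a j * T u ^ j)).
Proof.
  intros H0 Ht Ha HT HA u Hu.
  assert (Hau : Rabs (Rabs u) < 1) by (rewrite Rabs_Rabsolu; auto).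
  destruct (fubini_abs (fun j k => a j * tpow t j k * u ^ k) (fun j => a j * T (Rabs u) ^ j)
     (Series (fun j => a j * T (Rabs u) ^ j))) as [F1 [F2 F3]].
  - intro j. eapply is_series_ext.
    2:{ apply (is_series_scal_l (a j) _ _ (tpow_series t T Ht HT j (Rabs u) Hau)). }
    intro k. simpl. unfold scal; simpl; unfold mult; simpl.
    rewrite !Rabs_mult, <- RPow_abs, (Rabs_pos_eq (a j)), (Rabs_pos_eq (tpow t j k)); auto.
    ring. apply tpow_nn; auto.
  - apply Series_correct. apply HA. split. apply Rabs_pos. auto.
  - replace (Series (fun j => a j * T u ^ j)) with
      (Series (fun j => Series (fun k => a j * tpow t j k * u ^ k))).
    + eapply is_series_ext; [|exact F3]. intro k. simpl.
      assert (Z : forall j, (k < j)%nat -> a j * tpow t j k * u ^ k = 0).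
      { intros j Hj. rewrite tpow_low; auto. ring. }
      rewrite (is_series_unique _ _ (is_series_finite (fun j => a j * tpow t j k * u ^ k) k Z)).
      unfold bcomp. rewrite (Rmult_comm _ (u ^ k)), scal_sum. apply sum_eq. intros; ring.
    + apply Series_ext. intro j. apply is_series_unique.
      eapply is_series_ext.
      2:{ apply (is_series_scal_l (a j) _ _ (tpow_series t T Ht HT j u Hu)). }
      intro k. simpl. unfold scal; simpl; unfold mult; simpl. ring.
Qed.

Lemma bcomp_ge t a j k : (forall k, 0 <= t k) -> (forall j, 0 <= a j) -> (j <= k)%nat ->
  a j * tpow t j k <= bcomp t a k.
Proof.
  intros Ht Ha Hj. unfold bcomp.
  apply (sum_single_le (fun j => a j * tpow t j k)); auto.
  intro; apply Rmult_le_pos; auto. apply tpow_nn; auto.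
Qed.

Lemma bcomp_nn t a k : (forall k, 0 <= t k) -> (forall j, 0 <= a j) -> 0 <= bcomp t a k.
Proof.
  intros. unfold bcomp. apply cond_pos_sum. intro; apply Rmult_le_pos; auto. apply tpow_nn; auto.
Qed.

Lemma bcomp_0 t a : a 0%nat = 0 -> bcomp t a 0 = 0.
Proof. intro H; unfold bcomp; simpl. rewrite H; ring. Qed.

Fixpoint dbin (b : R) (k : nat) : R :=
  match k with O => 1 | S k' => dbin b k' * (INR k' - b) / INR (S k') end.

Lemma dbin_abs b k : 0 < b <= 1 -> Rabs (dbin b k) <= 1.
Proof.
  intro Hb. induction k. simpl. rewrite Rabs_R1; lra.
  change (dbin b (S k)) with (dbin b k * (INR k - b) / INR (S k)). unfold Rdiv. rewrite !Rabs_mult.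
  assert (HS : 0 < INR (S k)) by (apply lt_0_INR; lia).
  rewrite Rabs_inv, (Rabs_pos_eq (INR (S k))) by lra.
  assert (Rabs (INR k - b) <= INR (S k)).
  { rewrite S_INR. pose proof (pos_INR k). apply Rabs_le. lra. }
  assert (0 <= Rabs (dbin b k)) by apply Rabs_pos.
  assert (0 <= Rabs (INR k - b)) by apply Rabs_pos.
  assert (Rabs (INR k - b) * / INR (S k) <= 1).
  { apply Rmult_le_reg_r with (INR (S k)); auto. rewrite Rmult_assoc, Rinv_l by lra. lra. }
  assert (0 <= Rabs (INR k - b) * / INR (S k)).
  { apply Rmult_le_pos; auto. left; apply Rinv_0_lt_compat; auto. }
  rewrite Rmult_assoc. nra.
Qed.

Lemma dbin_1 b : dbin b 1 = - b.
Proof. simpl. field. Qed.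

Lemma dbin_nonpos b k : 0 < b <= 1 -> (1 <= k)%nat -> dbin b k <= 0.
Proof.
  intros Hb Hk. induction Hk. rewrite dbin_1; lra.
  change (dbin b (S m)) with (dbin b m * (INR m - b) / INR (S m)). assert (HS : 0 < INR (S m)) by (apply lt_0_INR; lia).
  assert (1 <= INR m) by (apply (le_INR 1); auto).
  unfold Rdiv. apply Rmult_le_0_r. apply Rmult_le_0_r; auto. lra.
  left; apply Rinv_0_lt_compat; auto.
Qed.

Lemma dbin_deriv b n : INR (S n) * dbin b (S n) = dbin b n * (INR n - b).
Proof.
  change (dbin b (S n)) with (dbin b n * (INR n - b) / INR (S n)).
  assert (0 < INR (S n)) by (apply lt_0_INR; lia). field. lra.
Qed.

Lemma pow_le_1' r n : 0 <= r <= 1 -> r ^ n <= 1.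
Proof. intro H. induction n; simpl. lra. pose proof (pow_le r n (proj1 H)). nra. Qed.

Lemma dbin_CV b x : 0 < b <= 1 -> Rabs x < 1 -> Rbar_lt (Rabs x) (CV_radius (dbin b)).
Proof.
  intros Hb Hx. set (r := (Rabs x + 1) / 2).
  assert (Hr : Rbar_le r (CV_radius (dbin b))).
  { apply (proj1 (CV_radius_bounded (dbin b))). exists 1. intro n.
    rewrite Rabs_mult. pose proof (dbin_abs b n Hb).
    assert (0 <= Rabs x) by apply Rabs_pos.
    assert (Rabs (r ^ n) <= 1).
    { rewrite <- RPow_abs. apply pow_le_1'. split. apply Rabs_pos. unfold r. rewrite Rabs_pos_eq; lra. }
    pose proof (Rabs_pos (dbin b n)). pose proof (Rabs_pos (r ^ n)). nra. }
  destruct (CV_radius (dbin b)) as [c| |]; simpl in *; auto.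
  unfold r in Hr. lra.
Qed.

Lemma pseries_is (a : nat -> R) x :
  Rbar_lt (Rabs x) (CV_radius a) -> is_series (fun k => a k * x ^ k) (PSeries a x).
Proof.
  intro H. apply is_pseries_R. apply PSeries_correct. apply CV_radius_inside; auto.
Qed.

Lemma binom_series b x : 0 < b <= 1 -> Rabs x < 1 ->
  is_series (fun k => dbin b k * x ^ k) (Rpower (1 - x) b).
Proof.
  intros Hb Hx.
  set (f := PSeries (dbin b)).
  assert (Key : forall y, Rabs y < 1 -> (1 - y) * PSeries (PS_derive (dbin b)) y = - b * f y).
  { intros y Hy. pose proof (dbin_CV b y Hb Hy) as Cy.
    assert (D1 : is_series (fun n => dbin b n * (INR n - b) * y ^ n) (PSeries (PS_derive (dbin b)) y)).
    { eapply is_series_ext; [|apply pseries_is; rewrite CV_radius_derive; auto].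
      intro n. unfold PS_derive. rewrite dbin_deriv. reflexivity. }
    assert (D2 : is_series (fun n => INR n * dbin b n * y ^ n) (y * PSeries (PS_derive (dbin b)) y)).
    { apply is_series_decr_1. cbv beta.
      match goal with |- is_series _ ?l => replace l with (y * PSeries (PS_derive (dbin b)) y) end.
      2:{ unfold plus, opp; simpl. ring. }
      eapply is_series_ext; [|apply (is_series_scal_l y _ _ (pseries_is (PS_derive (dbin b)) y ltac:(rewrite CV_radius_derive; auto)))].
      intro n. unfold PS_derive. rewrite dbin_deriv.
      change (y ^ S n) with (y * y ^ n). unfold scal; simpl; unfold mult; simpl. ring. }
    assert (D3 := is_series_minus _ _ _ _ D1 D2).
    assert (D4 : is_series (fun n => (- b) * (dbin b n * y ^ n)) (- b * f y)).
    { apply (@is_series_scal_l R_AbsRing R_NormedModule (-b) (fun n => dbin b n * y ^ n) (f y)). apply pseries_is; auto. }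
    assert (E := is_series_unique _ _ D3).
    assert (D5 : forall n, (fun n0 : nat => - b * (dbin b n0 * y ^ n0)) n =
       (fun n0 : nat => plus ((fun n1 : nat => dbin b n1 * (INR n1 - b) * y ^ n1) n0)
            (opp ((fun n1 : nat => INR n1 * dbin b n1 * y ^ n1) n0))) n).
    { intro n. unfold plus, opp; simpl. ring. }
    assert (D6 := is_series_ext _ _ _ (fun n => eq_sym (D5 n)) D3).
    assert (E1 := is_series_unique _ _ D6). rewrite (is_series_unique _ _ D4) in E1.
    unfold plus, opp in E1; simpl in E1. lra. }
  set (h := fun y => f y * Rpower (1 - y) (- b)).
  assert (Hd : forall y, Rabs y < 1 -> derivable_pt_lim h y 0).
  { intros y Hy. pose proof (dbin_CV b y Hb Hy) as Cy.
    assert (Hy1 : 0 < 1 - y) by (apply Rabs_def2 in Hy; lra).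
    assert (Df := proj1 (is_derive_Reals _ _ _) (is_derive_PSeries _ _ Cy)).
    assert (DR : derivable_pt_lim (fun z => Rpower (1 - z) (- b)) y
                   ((- b * Rpower (1 - y) (- b - 1)) * (-1))).
    { apply (derivable_pt_lim_comp (fun z => 1 - z) (fun w => Rpower w (-b))).
      replace (-1) with (0 - 1) by ring.
      apply (derivable_pt_lim_minus (fct_cte 1) id). apply derivable_pt_lim_const. apply derivable_pt_lim_id.
      apply derivable_pt_lim_power; auto. }
    assert (M := derivable_pt_lim_mult _ _ _ _ _ Df DR).
    replace 0 with (PSeries (PS_derive (dbin b)) y * Rpower (1 - y) (- b) +
        f y * (- b * Rpower (1 - y) (- b - 1) * -1)).
    exact M.
    assert (Rpower (1 - y) (- b) = (1 - y) * Rpower (1 - y) (- b - 1)).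
    { replace (- b) with ((- b - 1) + 1) at 1 by ring. rewrite Rpower_plus, Rpower_1; auto. ring. }
    rewrite H. specialize (Key y Hy).
    replace (PSeries (PS_derive (dbin b)) y * ((1 - y) * Rpower (1 - y) (- b - 1)))
      with (((1 - y) * PSeries (PS_derive (dbin b)) y) * Rpower (1 - y) (- b - 1)) by ring.
    rewrite Key. ring. }
  assert (Hh : h x = h 0).
  { destruct (Req_dec x 0) as [->|Hx0]. reflexivity.
    destruct (Rlt_or_le 0 x) as [Hp|Hn].
    - destruct (MVT_cor2 h (fun _ => 0) 0 x Hp) as [c [Hc _]].
      intros c Hc. apply Hd. apply Rabs_def1; apply Rabs_def2 in Hx; lra.
      lra.
    - destruct (MVT_cor2 h (fun _ => 0) x 0) as [c [Hc _]]. lra.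
      intros c Hc. apply Hd. apply Rabs_def1; apply Rabs_def2 in Hx; lra.
      lra. }
  assert (H0 : h 0 = 1).
  { unfold h, f. rewrite PSeries_0. simpl. replace (1 - 0) with 1 by ring.
    unfold Rpower. rewrite ln_1, Rmult_0_r, exp_0. ring. }
  assert (Hx1 : 0 < 1 - x) by (apply Rabs_def2 in Hx; lra).
  assert (Fx : f x = Rpower (1 - x) b).
  { rewrite H0 in Hh. unfold h in Hh. rewrite Rpower_Ropp in Hh.
    assert (0 < Rpower (1 - x) b) by (unfold Rpower; apply exp_pos).
    apply (Rmult_eq_reg_r (/ Rpower (1 - x) b)). rewrite Hh. field. lra.
    apply Rinv_neq_0_compat; lra. }
  rewrite <- Fx. apply pseries_is. apply dbin_CV; auto.
Qed.

Definition tB (b : R) (k : nat) : R := match k with O => 0 | S _ => - dbin b k end.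

Lemma tB_series b x : 0 < b <= 1 -> Rabs x < 1 ->
  is_series (fun k => tB b k * x ^ k) (1 - Rpower (1 - x) b).
Proof.
  intros Hb Hx.
  assert (M := is_series_minus _ _ _ _ (delta_series x) (binom_series b x Hb Hx)).
  eapply is_series_ext; [|exact M].
  intro n. unfold plus, opp; simpl. destruct n; simpl; ring.
Qed.

Lemma tB_nn b k : 0 < b <= 1 -> 0 <= tB b k.
Proof. intro Hb. destruct k. simpl; lra. unfold tB. pose proof (dbin_nonpos b (S k) Hb ltac:(lia)). lra. Qed.

Lemma tB_1 b : tB b 1 = b.
Proof. unfold tB. rewrite dbin_1. ring. Qed.

Lemma abs_bound (t : nat -> R) (F : R -> R) x :
  (forall k, 0 <= t k) -> is_series (fun k => t k * x ^ k) (F x) ->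
  is_series (fun k => t k * Rabs x ^ k) (F (Rabs x)) -> Rabs (F x) <= F (Rabs x).
Proof.
  intros Hp H1 H2. rewrite <- (is_series_unique _ _ H1), <- (is_series_unique _ _ H2).
  assert (E : forall n, Rabs (t n * x ^ n) = t n * Rabs x ^ n).
  { intro n. rewrite Rabs_mult, <- RPow_abs, (Rabs_pos_eq (t n)); auto. }
  rewrite <- (Series_ext _ _ E).
  apply Series_Rabs. exists (F (Rabs x)). eapply is_series_ext; [|exact H2].
  intro n. rewrite E; auto.
Qed.

Lemma Rpower_pos a b : 0 < Rpower a b.
Proof. unfold Rpower; apply exp_pos. Qed.

Lemma Rpower_1l b : Rpower 1 b = 1.
Proof. unfold Rpower. rewrite ln_1, Rmult_0_r, exp_0. reflexivity. Qed.

Lemma Rpower_le1 a b : 0 < a <= 1 -> 0 <= b -> Rpower a b <= 1.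
Proof. intros Ha Hb. rewrite <- (Rpower_1l b). apply Rle_Rpower_l; auto. Qed.

Definition aQ (r : R) (j : nat) : R := match j with O => 0 | S j' => (1 - r) * r ^ j' end.

Lemma aQ_series r y : 0 < r < 1 -> Rabs y < 1 ->
  is_series (fun j => aQ r j * y ^ j) ((1 - r) * y / (1 - r * y)).
Proof.
  intros Hr Hy.
  assert (Hry : Rabs (r * y) < 1).
  { rewrite Rabs_mult, Rabs_pos_eq by lra. pose proof (Rabs_pos y). nra. }
  apply is_series_decr_1. cbv beta.
  match goal with |- is_series _ ?l => replace l with ((1 - r) * y * / (1 - r * y)) end.
  2:{ unfold plus, opp; simpl. field. apply Rabs_def2 in Hry. lra. }
  eapply is_series_ext; [|apply (is_series_scal_l ((1 - r) * y) _ _ (is_series_geom _ Hry))].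
  intro n. unfold scal; simpl; unfold mult; simpl. rewrite Rpow_mult_distr. ring.
Qed.

Lemma aQ_nn r j : 0 < r < 1 -> 0 <= aQ r j.
Proof. intro Hr. destruct j; simpl. lra. apply Rmult_le_pos. lra. apply pow_le; lra. Qed.

Definition TA al x := 1 - Rpower (1 - x) al.
Definition rr la := / (la + 1).
Definition QF al la x := (1 - rr la) * TA al x / (1 - rr la * TA al x).
Definition qc al la := bcomp (tB al) (aQ (rr la)).
Definition pc al mu la := bcomp (qc al la) (tB mu).

Section S.
Variables al mu la : R.
Hypothesis Hal : 0 < al <= 1.
Hypothesis Hmu : 0 < mu <= 1.
Hypothesis Hla : 0 < la.

Lemma rr_range : 0 < rr la < 1.
Proof.
  unfold rr. split. apply Rinv_0_lt_compat; lra.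
  rewrite <- Rinv_1. apply Rinv_lt_contravar; lra.
Qed.

Lemma TA_series x : Rabs x < 1 -> is_series (fun k => tB al k * x ^ k) (TA al x).
Proof. intro; apply tB_series; auto. Qed.

Lemma TA_abs x : Rabs x < 1 -> Rabs (TA al x) < 1.
Proof.
  intro Hx. assert (Hax : Rabs (Rabs x) < 1) by (rewrite Rabs_Rabsolu; auto).
  eapply Rle_lt_trans.
  apply (abs_bound (tB al) (TA al) x (fun k => tB_nn al k Hal) (TA_series x Hx) (TA_series _ Hax)).
  unfold TA. pose proof (Rpower_pos (1 - Rabs x) al). lra.
Qed.

Lemma TA_range x : 0 <= x < 1 -> 0 <= TA al x < 1.
Proof.
  intro Hx. unfold TA. pose proof (Rpower_pos (1 - x) al).
  pose proof (Rpower_le1 (1 - x) al ltac:(lra) ltac:(lra)). lra.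
Qed.

Lemma Q_series u : Rabs u < 1 -> is_series (fun k => qc al la k * u ^ k) (QF al la u).
Proof.
  intro Hu. pose proof rr_range as Hr.
  assert (C := compose (tB al) (aQ (rr la)) (TA al) eq_refl (fun k => tB_nn al k Hal)
      (fun j => aQ_nn _ j Hr) TA_series).
  assert (HA : forall x, 0 <= x < 1 -> ex_series (fun j => aQ (rr la) j * TA al x ^ j)).
  { intros x Hx. eexists. apply aQ_series; auto. apply TA_abs. rewrite Rabs_pos_eq; lra. }
  specialize (C HA u Hu).
  rewrite (is_series_unique _ _ (aQ_series _ _ Hr (TA_abs u Hu))) in C.
  exact C.
Qed.

Lemma qc_nn k : 0 <= qc al la k.
Proof. apply bcomp_nn. intro; apply tB_nn; auto. intro; apply aQ_nn, rr_range. Qed.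

Lemma qc_0 : qc al la 0 = 0.
Proof. apply bcomp_0. reflexivity. Qed.

Lemma qc_pos k : (1 <= k)%nat -> 0 < qc al la k.
Proof.
  intro Hk. pose proof rr_range as Hr.
  eapply Rlt_le_trans; [|apply (bcomp_ge (tB al) (aQ (rr la)) k k); auto].
  rewrite tpow_diag by reflexivity. rewrite tB_1.
  destruct k. lia. simpl aQ. apply Rmult_lt_0_compat. apply Rmult_lt_0_compat. lra.
  apply pow_lt; lra. apply pow_lt; lra.
  intro; apply tB_nn; auto. intro; apply aQ_nn; auto.
Qed.

Lemma QF_range x : 0 <= x < 1 -> 0 <= QF al la x < 1.
Proof.
  intro Hx. pose proof rr_range as Hr. pose proof (TA_range x Hx) as HT.
  unfold QF. assert (0 < 1 - rr la * TA al x) by nra.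
  split. apply Rmult_le_pos. nra. left; apply Rinv_0_lt_compat; auto.
  apply (Rmult_lt_reg_r (1 - rr la * TA al x)); auto. unfold Rdiv.
  rewrite Rmult_assoc, Rinv_l by lra. nra.
Qed.

Lemma QF_abs u : Rabs u < 1 -> Rabs (QF al la u) < 1.
Proof.
  intro Hu. assert (Hau : Rabs (Rabs u) < 1) by (rewrite Rabs_Rabsolu; auto).
  eapply Rle_lt_trans.
  apply (abs_bound (qc al la) (QF al la) u qc_nn (Q_series u Hu) (Q_series _ Hau)).
  apply QF_range. split. apply Rabs_pos. auto.
Qed.

Lemma P_series u : Rabs u < 1 ->
  is_series (fun k => pc al mu la k * u ^ k) (1 - Rpower (1 - QF al la u) mu).
Proof.
  intro Hu.
  assert (C := compose (qc al la) (tB mu) (QF al la) qc_0 qc_nn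
      (fun j => tB_nn mu j Hmu) Q_series).
  assert (HA : forall x, 0 <= x < 1 -> ex_series (fun j => tB mu j * QF al la x ^ j)).
  { intros x Hx. eexists. apply tB_series; auto. apply QF_abs. rewrite Rabs_pos_eq; lra. }
  specialize (C HA u Hu).
  rewrite (is_series_unique _ _ (tB_series mu _ Hmu (QF_abs u Hu))) in C.
  exact C.
Qed.

Lemma pc_nn k : 0 <= pc al mu la k.
Proof. apply bcomp_nn. exact qc_nn. intro; apply tB_nn; auto. Qed.

Lemma pc_0 : pc al mu la 0 = 0.
Proof. apply bcomp_0. reflexivity. Qed.

Lemma pc_pos k : (1 <= k)%nat -> 0 < pc al mu la k.
Proof.
  intro Hk.
  eapply Rlt_le_trans; [|apply (bcomp_ge (qc al la) (tB mu) 1 k); auto].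
  rewrite tpow_one, tB_1. apply Rmult_lt_0_compat. lra. apply qc_pos; auto.
  exact qc_nn. intro; apply tB_nn; auto.
Qed.

End S.

Definition cc al mu la (k : nat) : R :=
  Rpower (la + 1) (- mu) * ((match k with O => 1 | _ => 0 end) - pc al mu la k).

Section S2.
Variables al mu la : R.
Hypothesis Hal : 0 < al <= 1.
Hypothesis Hmu : 0 < mu <= 1.
Hypothesis Hla : 0 < la.

Lemma one_minus_QF x : Rabs x < 1 ->
  1 - QF al la x = Rpower (1 - x) al / (1 - rr la + rr la * Rpower (1 - x) al).
Proof.
  intro Hx. pose proof (rr_range la Hla) as Hr. pose proof (Rpower_pos (1 - x) al).
  unfold QF, TA. field. nra.
Qed.

Lemma gen_identity u : Rabs u < 1 ->
  is_series (fun k => cc al mu la k * u ^ k) (gen_fun al mu la u).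
Proof.
  intro Hu.
  assert (M := is_series_minus _ _ _ _ (delta_series u) (P_series al mu la Hal Hmu Hla u Hu)).
  assert (M2 := is_series_scal_l (Rpower (la + 1) (- mu)) _ _ M).
  replace (gen_fun al mu la u) with
    (scal (Rpower (la + 1) (- mu)) (plus 1 (opp (1 - Rpower (1 - QF al la u) mu)))).
  - eapply is_series_ext; [|exact M2]. intro n. unfold cc, scal, plus, opp; simpl; unfold mult; simpl.
    destruct n; simpl; ring.
  - unfold scal, plus, opp; simpl; unfold mult; simpl.
    pose proof (rr_range la Hla) as Hr.
    assert (HQ := QF_abs al la Hal Hla u Hu). apply Rabs_def2 in HQ.
    set (s := Rpower (1 - u) al). assert (Hs : 0 < s) by apply Rpower_pos.
    assert (E : s / (la + s) = rr la * (1 - QF al la u)).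
    { rewrite one_minus_QF by auto. fold s. unfold rr. field. lra. }
    unfold gen_fun. fold s. rewrite E.
    rewrite <- Rpower_mult_distr by lra.
    replace (Rpower (rr la) mu) with (Rpower (la + 1) (- mu)).
    ring.
    unfold Rpower, rr. rewrite ln_Rinv by lra. f_equal. ring.
Qed.

Lemma bern h N : 0 <= h <= 1 -> 1 - INR N * h <= (1 - h) ^ N.
Proof.
  intro Hh. induction N. simpl; lra.
  rewrite S_INR. simpl. pose proof (pos_INR N). nra.
Qed.

Lemma pow_anti x k N : 0 <= x <= 1 -> (k <= N)%nat -> x ^ N <= x ^ k.
Proof.
  intros Hx Hk. replace N with (k + (N - k))%nat by lia. rewrite pow_add.
  pose proof (pow_le x k (proj1 Hx)). pose proof (pow_le_1' x (N - k) Hx). nra.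
Qed.

Lemma p_sum : is_series (pc al mu la) 1.
Proof.
  pose proof (rr_range la Hla) as Hr.
  set (p := pc al mu la).
  assert (Pp : forall k, 0 <= p k) by (intro; apply pc_nn; auto).
  assert (PS : forall x, 0 <= x < 1 -> is_series (fun k => p k * x ^ k) (1 - Rpower (1 - QF al la x) mu)).
  { intros x Hx. apply P_series; auto. rewrite Rabs_pos_eq; lra. }
  assert (B : forall N, sum_f_R0 p N <= 1).
  { intro N. set (S := sum_f_R0 p N).
    assert (HxS : forall x, 0 <= x < 1 -> x ^ N * S <= 1).
    { intros x Hx. unfold S. rewrite scal_sum.
      eapply Rle_trans. apply sum_Rle. intros k Hk.
      apply Rmult_le_compat_l. apply Pp. apply (pow_anti x k N); auto; lra.
      assert (Pk : forall k, 0 <= p k * x ^ k).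
      { intro k. apply Rmult_le_pos; auto. apply pow_le; lra. }
      eapply Rle_trans. apply (partial_le _ _ Pk (PS x Hx)).
      pose proof (Rpower_pos (1 - QF al la x) mu). lra. }
    destruct (Rle_lt_dec S 1) as [|HS]; auto. exfalso.
    set (h := (1 - / S) / (2 * (INR N + 1))).
    assert (HS0 : 0 < / S) by (apply Rinv_0_lt_compat; lra).
    assert (HS1 : / S < 1) by (rewrite <- Rinv_1; apply Rinv_lt_contravar; lra).
    assert (HN : 0 < INR N + 1) by (pose proof (pos_INR N); lra).
    assert (Hh0 : 0 <= h) by (unfold h; apply Rmult_le_pos; [lra| left; apply Rinv_0_lt_compat; lra]).
    assert (Hh1 : INR N * h <= (1 - / S) / 2).
    { unfold h. unfold Rdiv. rewrite Rinv_mult.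
      assert (INR N * / (INR N + 1) <= 1).
      { apply (Rmult_le_reg_r (INR N + 1)); auto. rewrite Rmult_assoc, Rinv_l by lra. lra. }
      assert (0 <= INR N * / (INR N + 1)).
      { apply Rmult_le_pos. apply pos_INR. left; apply Rinv_0_lt_compat; lra. }
      nra. }
    assert (Hh2 : h < 1).
    { assert (h * (2 * (INR N + 1)) = 1 - / S) by (unfold h; field; lra).
      pose proof (pos_INR N). nra. }
    assert (Hh0' : 0 < h) by (unfold h; apply Rdiv_lt_0_compat; lra).
    specialize (HxS (1 - h) ltac:(lra)).
    pose proof (bern h N ltac:(lra)).
    assert (S * (1 - / S) = S - 1) by (field; lra).
    nra. }
  destruct (nn_bounded p 1 Pp B) as [Ep Lp].
  set (L := Series p) in *.
  assert (Low : forall x, 0 <= x < 1 -> 1 - L <= Rpower (1 - QF al la x) mu).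
  { intros x Hx. assert (E := is_series_unique _ _ (PS x Hx)).
    assert (Series (fun k => p k * x ^ k) <= L).
    { apply Series_le; auto. intro k. split. apply Rmult_le_pos; auto. apply pow_le; lra.
      pose proof (pow_le_1' x k ltac:(lra)). specialize (Pp k). nra. }
    lra. }
  assert (L1 : 1 <= L).
  { destruct (Rle_lt_dec 1 L) as [|HL]; auto. exfalso.
    set (eps := 1 - L). assert (He : 0 < eps) by (unfold eps; lra).
    set (d := Rpower (eps / 2) (/ mu)).
    assert (Hd : 0 < d) by apply Rpower_pos.
    assert (Hdm : Rpower d mu = eps / 2).
    { unfold d. rewrite Rpower_mult, Rinv_l, Rpower_1; lra. }
    set (w := Rmin (1/2) (Rpower ((1 - rr la) * d) (/ al))).
    assert (Hw0 : 0 < w).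
    { unfold w. apply Rmin_pos. lra. apply Rpower_pos. }
    assert (Hw1 : w <= 1/2) by apply Rmin_l.
    assert (Hw2 : w <= Rpower ((1 - rr la) * d) (/ al)) by apply Rmin_r.
    set (x := 1 - w).
    assert (Hx : 0 <= x < 1) by (unfold x; lra).
    assert (Hs : Rpower (1 - x) al <= (1 - rr la) * d).
    { replace (1 - x) with w by (unfold x; ring).
      eapply Rle_trans. apply Rle_Rpower_l. lra. split; [lra| exact Hw2].
      rewrite Rpower_mult, Rinv_l, Rpower_1. lra. nra. lra. }
    assert (HL2 := Low x Hx).
    rewrite one_minus_QF in HL2 by (rewrite Rabs_pos_eq; lra).
    set (s := Rpower (1 - x) al) in *.
    assert (Hs0 : 0 < s) by apply Rpower_pos.
    assert (Q1 : s / (1 - rr la + rr la * s) <= d).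
    { apply (Rmult_le_reg_r (1 - rr la + rr la * s)). nra. unfold Rdiv.
      rewrite Rmult_assoc, Rinv_l by nra.
      assert (0 <= rr la * s * d) by (apply Rmult_le_pos; [apply Rmult_le_pos|]; lra).
      replace (d * (1 - rr la + rr la * s)) with ((1 - rr la) * d + rr la * s * d) by ring. lra. }
    assert (Q0 : 0 < s / (1 - rr la + rr la * s)).
    { apply Rdiv_lt_0_compat; nra. }
    assert (Rpower (s / (1 - rr la + rr la * s)) mu <= Rpower d mu).
    { apply Rle_Rpower_l; lra. }
    unfold eps in *. lra. }
  assert (Series p = 1) by (unfold L in *; lra).
  rewrite <- H. apply Series_correct; auto.
Qed.

Lemma cc_sum : is_series (cc al mu la) 0.
Proof.
  assert (D : is_series (fun k : nat => match k with O => 1 | _ => 0 end) 1).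
  { eapply is_series_ext; [|apply (delta_series 1)]. intro n; destruct n; simpl; ring. }
  assert (M := is_series_scal_l (Rpower (la + 1) (- mu)) _ _ (is_series_minus _ _ _ _ D p_sum)).
  replace 0 with (scal (Rpower (la + 1) (- mu)) (plus 1 (opp 1))).
  eapply is_series_ext; [|exact M]. intro n. unfold cc, scal, plus, opp; simpl; unfold mult; simpl. ring.
  unfold scal, plus, opp; simpl; unfold mult; simpl. ring.
Qed.

Lemma cc_0 : cc al mu la 0 = Rpower (la + 1) (- mu).
Proof. unfold cc. rewrite pc_0; auto. ring. Qed.

Lemma cc_neg k : (1 <= k)%nat -> cc al mu la k < 0.
Proof.
  intro Hk. unfold cc. destruct k. lia.
  pose proof (pc_pos al mu la Hal Hmu Hla (S k) Hk). pose proof (Rpower_pos (la + 1) (- mu)). nra.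
Qed.

Lemma CV_pos_gen c : is_gen_coeffs al mu la c -> Rbar_lt 0 (CV_radius c).
Proof.
  intro H. assert (H2 := H (1/2) ltac:(rewrite Rabs_pos_eq; lra)).
  assert (L := ex_series_lim_0 _ (ex_intro _ _ H2)).
  destruct (Rbar_lt_dec 0 (CV_radius c)) as [|Hn]; auto. exfalso.
  apply (CV_disk_outside c (1/2)); auto.
  pose proof (CV_radius_ge_0 c).
  destruct (CV_radius c) as [v| |]; simpl in *; try tauto.
  rewrite Rabs_pos_eq; lra.
Qed.

Lemma gen_unique c : is_gen_coeffs al mu la c -> forall n, c n = cc al mu la n.
Proof.
  intros H n. apply PSeries_ext_recip.
  apply CV_pos_gen; auto.
  apply CV_pos_gen. intros u Hu; apply gen_identity; auto.
  exists (mkposreal 1 Rlt_0_1). intros y Hy.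
  change (Rabs (y - 0) < 1) in Hy. rewrite Rminus_0_r in Hy.
  rewrite (is_pseries_unique c y (gen_fun al mu la y)).
  rewrite (is_pseries_unique (cc al mu la) y (gen_fun al mu la y)). reflexivity.
  apply is_pseries_R. apply gen_identity; auto.
  apply is_pseries_R. apply H; auto.
Qed.

End S2.

Lemma circ_lt c m n : (n < m)%Z -> circ_mx c m n = 0.
Proof. intro H. unfold circ_mx. destruct (Z.leb_spec m n); [lia|reflexivity]. Qed.

Lemma circ_ge c m n : (m <= n)%Z -> circ_mx c m n = c (Z.to_nat (n - m)).
Proof. intro H. unfold circ_mx. destruct (Z.leb_spec m n); [reflexivity|lia]. Qed.

Lemma circ_row c m j : circ_mx c m (m + Z.of_nat j)%Z = c j.
Proof. rewrite circ_ge by lia. f_equal. lia. Qed.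

Lemma kron_eq m : kron m m = 1.
Proof. unfold kron. destruct (Z.eq_dec m m); [reflexivity|tauto]. Qed.

Lemma kron_ne m n : m <> n -> kron m n = 0.
Proof. intro H. unfold kron. destruct (Z.eq_dec m n); [tauto|reflexivity]. Qed.

Lemma kron_row m j : kron m (m + Z.of_nat j)%Z = match j with O => 1 | _ => 0 end.
Proof.
  destruct j. replace (m + Z.of_nat 0)%Z with m by lia. apply kron_eq.
  apply kron_ne. lia.
Qed.

Theorem mainTheorem16 (alpha mu lambda : R)
  (Halpha : 0 < alpha <= 1) (Hmu : 0 < mu <= 1) (Hlambda : 0 < lambda) :
  (exists c : nat -> R, is_gen_coeffs alpha mu lambda c) /\
  (forall c : nat -> R, is_gen_coeffs alpha mu lambda c ->
     c 0%nat = Rpower (lambda + 1) (- mu) /\ 0 < c 0%nat /\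
     (forall k : nat, (1 <= k)%nat -> c k < 0) /\
     is_series c 0 /\
     good_laplacian (circ_mx c) /\
     transition_mx (fun m n => kron m n - circ_mx c m n / c 0%nat) /\
     (forall m n : Z, (m < n)%Z -> 0 < kron m n - circ_mx c m n / c 0%nat)).
Proof.
  split.
  { exists (cc alpha mu lambda). intros u Hu. apply gen_identity; auto. }
  intros c Hc.
  assert (E := gen_unique alpha mu lambda Halpha Hmu Hlambda c Hc).
  assert (C0 : c 0%nat = Rpower (lambda + 1) (- mu)) by (rewrite E; apply cc_0; auto).
  assert (P0 : 0 < c 0%nat) by (rewrite C0; apply Rpower_pos).
  assert (Neg : forall k, (1 <= k)%nat -> c k < 0).
  { intros k Hk. rewrite E. apply cc_neg; auto. }
  assert (Sum : is_series c 0).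
  { eapply is_series_ext; [|apply (cc_sum alpha mu lambda Halpha Hmu Hlambda)].
    intro n; rewrite E; reflexivity. }
  assert (Off : forall m n, (m < n)%Z -> circ_mx c m n < 0).
  { intros m n H. rewrite circ_ge by lia. apply Neg. lia. }
  assert (Pos : forall m n : Z, (m < n)%Z -> 0 < kron m n - circ_mx c m n / c 0%nat).
  { intros m n H. rewrite kron_ne by lia. specialize (Off m n H).
    assert (circ_mx c m n / c 0%nat < 0).
    { unfold Rdiv. apply Rmult_neg_pos; auto. apply Rinv_0_lt_compat; auto. }
    lra. }
  split; auto. split; auto. split; auto. split; auto.
  split; [|split; auto].
  - split; [|split; [|split]].
    + apply circ_lt.
    + intro m. eapply is_series_ext; [|exact Sum]. intro j. rewrite circ_row. reflexivity.
    + intro m. rewrite circ_ge by lia. replace (Z.to_nat (m - m)) with 0%nat by lia. auto.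
    + intros m n H. destruct (Z.lt_trichotomy m n) as [H1|[H1|H1]].
      left; apply Off; auto. tauto. right; apply circ_lt; auto.
  - split; [|split].
    + intros m n H. rewrite circ_lt, kron_ne by lia. unfold Rdiv. ring.
    + intros m n. destruct (Z.lt_trichotomy m n) as [H1|[H1|H1]].
      left; apply Pos; auto.
      subst. rewrite kron_eq, circ_ge by lia. replace (Z.to_nat (n - n)) with 0%nat by lia.
      right. field. lra.
      rewrite circ_lt, kron_ne by lia. right. unfold Rdiv. ring.
    + intro m.
      assert (D : is_series (fun k : nat => match k with O => 1 | _ => 0 end) 1).
      { eapply is_series_ext; [|apply (delta_series 1)]. intro n; destruct n; simpl; ring. }
      assert (S2 := is_series_scal_r (/ c 0%nat) _ _ Sum).
      assert (M := is_series_minus _ _ _ _ D S2).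
      replace 1 with (plus 1 (opp (0 * / c 0%nat))) by (unfold plus, opp; simpl; ring).
      eapply is_series_ext; [|exact M]. intro j. cbv beta.
      rewrite kron_row, circ_row. unfold plus, opp; simpl. unfold Rdiv. ring.
Qed.
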